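(* Let $G$ be a compact matrix Lie group of $n\times n$ unitary matrices with normalized Haar measure $\eta$, let $\epsilon>0$, and let $X=\{x_1,\dots,x_N\}\subset\mathbb{C}^n$ satisfy $x_i\neq x_j$ for $i\neq j$ and $Ax_i\neq x_i$ for all $i$ and all $A\in G$ with $A\neq I$. Let $t$ be a positive integer and let $S^t_{ij}$ be as in the context. Suppose $x_j=Q\cdot x_i$ for some $Q\in G$. Then for all $k,r\in[N]$ and $R\in G$, $$\int_G S^t_{ik}(I,C)\,S^t_{ir}(I,CR)\,d\eta(C)=\int_G S^t_{jk}(I,C)\,S^t_{jr}(I,CR)\,d\eta(C),$$ i.e. $S^t_{i,\cdot}(I,\cdot)\circledast S^t_{i,\cdot}(I,\cdot)=S^t_{j,\cdot}(I,\cdot)\circledast S^t_{j,\cdot}(I,\cdot)$ as functions on $[N]^2\times G$.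
   Context: $[N]=\{1,\dots,N\}$. $W_{ij}(A,B)=e^{-\|Ax_i-Bx_j\|^2/\epsilon}$; $D_{ii}=\sum_{j=1}^N\int_G W_{ij}(I,C)\,d\eta(C)$; $S_{ij}(A,B)=W_{ij}(A,B)/\sqrt{D_{ii}D_{jj}}$. $S^1_{ij}=S_{ij}$ and $S^t_{ij}(A,B)=\sum_{k=1}^N\int_G S^{t-1}_{ik}(A,C)S_{kj}(C,B)\,d\eta(C)$ for $t\ge2$ (the kernel of the $t$-th power of the integral operator $S\{f\}(i,A)=\sum_j\int_G S_{ij}(A,B)f_j(B)\,d\eta(B)$ on $L^2([N]\times G)$). For functions $f,g$ on $[N]\times G$ (written $f(k,C)=f_k(C)$), $(f\circledast g)(k,r,R)=\int_G f_k(C)\,g_r(CR)\,d\eta(C)$; $S^t_{i,\cdot}(I,\cdot)$ denotes $(k,C)\mapsto S^t_{ik}(I,C)$. *)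

(* Defs.v *)
From HB Require Import structures.
From mathcomp Require Import all_boot all_order all_algebra.
From mathcomp Require Import complex.
From mathcomp Require Import all_classical all_reals all_analysis.
Import numFieldNormedType.Exports.
Import Order.TTheory GRing.Theory Num.Theory.
Set Implicit Arguments.
Unset Strict Implicit.
Unset Printing Implicit Defensive.
Local Open Scope ring_scope.
Local Open Scope classical_set_scope.

(* pointed structure on C (needed for sigma-algebras generated on M_n(C)) *)
HB.instance Definition _ (R : realType) := isPointed.Build R[i] 0.

Section Defs0.
Variable R : realType.
Variable n : nat.

Definition reim (A : 'M[R[i]]_n) : 'M[R]_n * 'M[R]_n :=
  (map_mx (@complex.Re R) A, map_mx (@complex.Im R) A).

Definition adjmx (A : 'M[R[i]]_n) : 'M[R[i]]_n := (map_mx (@conjc R) A)^T.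

Definition unitary (A : 'M[R[i]]_n) : Prop := adjmx A *m A = 1%:M.

(* The usual topology of M_n(C) = R^{2 n^2} is the one transported by reim;
   its Borel sets are generated by the preimages of open sets. *)
Definition cmx_open : set (set 'M[R[i]]_n) :=
  [set reim @^-1` U | U in [set U | open U]].


End Defs0.

Notation cmx_borel R n := (g_sigma_algebraType (@cmx_open R n)).

Section Defs.
Variable R : realType.
Variable n : nat.
Local Notation cmx_borel := (cmx_borel R n).

(* G is a compact matrix Lie group of unitary matrices
   (= a closed subgroup of U(n), by Cartan's closed subgroup theorem) *)
Definition compact_unitary_group (G : set 'M[R[i]]_n) : Prop :=
  [/\ G 1%:M,
      (forall A B, G A -> G B -> G (A *m B)),
      (forall A, G A -> G (invmx A)),
      (forall A, G A -> @unitary R n A) &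
      closed (@reim R n @` G)].

Definition haar_prob (G : set 'M[R[i]]_n) (eta : probability cmx_borel R) : Prop :=
  eta (G : set cmx_borel) = 1%E /\
  forall (A : 'M[R[i]]_n), G A -> forall B : set cmx_borel, measurable B ->
    eta ((fun C : cmx_borel => (A *m C : 'M[R[i]]_n) : cmx_borel) @^-1` B) = eta B.

Definition sqnorm (v : 'cV[R[i]]_n) : R :=
  \sum_(k < n) ((complex.Re (v k ord0)) ^+ 2 + (complex.Im (v k ord0)) ^+ 2).

Variables (N : nat) (G : set 'M[R[i]]_n) (eta : probability cmx_borel R)
  (eps : R) (x : 'I_N -> 'cV[R[i]]_n).

Definition intG (f : 'M[R[i]]_n -> R) : R := Rintegral eta (G : set cmx_borel) f.

Definition Wk (i j : 'I_N) (A B : 'M[R[i]]_n) : R :=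
  expR (- sqnorm (A *m x i - B *m x j) / eps).

Definition Dk (i : 'I_N) : R := \sum_(j < N) intG (fun C => Wk i j 1%:M C).

Definition Sk (i j : 'I_N) (A B : 'M[R[i]]_n) : R :=
  Wk i j A B / Num.sqrt (Dk i * Dk j).

(* Spow t = S^t for t >= 1 (Spow 0 is set to S as a junk value) *)
Fixpoint Spow (t : nat) (i j : 'I_N) (A B : 'M[R[i]]_n) : R :=
  match t with
  | (u.+1 as t').+1 =>
      \sum_(k < N) intG (fun C => Spow t' i k A C * Sk k j C B)
  | _ => Sk i j A B
  end.

Definition circconv (f g : 'I_N -> 'M[R[i]]_n -> R) (k r : 'I_N)
  (R0 : 'M[R[i]]_n) : R := intG (fun C => f k C * g r (C *m R0)).

End Defs.

(* Main.v *)
Require Import Defs.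
From HB Require Import structures.
From mathcomp Require Import all_boot all_order all_algebra.
From mathcomp Require Import complex.
From mathcomp Require Import all_classical all_reals all_analysis.
Import numFieldNormedType.Exports.
Import Order.TTheory GRing.Theory Num.Theory.
Local Open Scope ring_scope.
Local Open Scope classical_set_scope.

Lemma ReD (R : realType) (x y : R[i]) : complex.Re (x + y) = complex.Re x + complex.Re y.
Proof. by case: x => a b; case: y => c d. Qed.
Lemma ReM (R : realType) (x y : R[i]) : complex.Re (x * y) = complex.Re x * complex.Re y - complex.Im x * complex.Im y.
Proof. by case: x => a b; case: y => c d. Qed.
Lemma ImM (R : realType) (x y : R[i]) : complex.Im (x * y) = complex.Re x * complex.Im y + complex.Im x * complex.Re y.
Proof. by case: x => a b; case: y => c d. Qed.
Lemma Re_sum (R : realType) I (r : seq I) (P : pred I) (F : I -> R[i]) :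
  complex.Re (\sum_(k <- r | P k) F k) = \sum_(k <- r | P k) complex.Re (F k).
Proof. by elim/big_rec2: _ => // k a b _ <-; rewrite ReD. Qed.
Lemma ImD (R : realType) (x y : R[i]) : complex.Im (x + y) = complex.Im x + complex.Im y.
Proof. by case: x => a b; case: y => c d. Qed.
Lemma Im_sum (R : realType) I (r : seq I) (P : pred I) (F : I -> R[i]) :
  complex.Im (\sum_(k <- r | P k) F k) = \sum_(k <- r | P k) complex.Im (F k).
Proof. by elim/big_rec2: _ => // k a b _ <-; rewrite ImD. Qed.

Lemma reim_mul (R : realType) n (A C : 'M[R[i]]_n) :
  reim (A *m C) = ((reim A).1 *m (reim C).1 - (reim A).2 *m (reim C).2,
                   (reim A).2 *m (reim C).1 + (reim A).1 *m (reim C).2).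
Proof.
rewrite /reim /=; congr (_, _); apply/matrixP => a b; rewrite !mxE.
  rewrite Re_sum -sumrB; apply: eq_bigr => k _; by rewrite ReM !mxE.
rewrite Im_sum -big_split; apply: eq_bigr => k _; by rewrite ImM !mxE addrC.
Qed.
Lemma cont_mulmx (R : realType) m n p (L : 'M[R]_(m,n)) : continuous (fun M : 'M[R]_(n,p) => L *m M).
Proof.
move=> u B /nbhs_ballP [e /= e0 eB].
set c := \sum_i \sum_k `|L i k|.
have c0 : 0 <= c by apply: sumr_ge0 => i _; apply: sumr_ge0.
have c1 : 0 < c + 1 by rewrite ltr_wpDl.
apply/nbhs_ballP; exists (e / (c + 1)); first by rewrite /= divr_gt0.
move=> /= v [_ uv]. apply: eB. split => // i j.
rewrite /ball /= !mxE -sumrB.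
have ci : \sum_k `|L i k| <= c.
  rewrite /c (bigD1 i) //= lerDl; apply: sumr_ge0 => *; apply: sumr_ge0 => *; exact: normr_ge0.
apply: (le_lt_trans (ler_norm_sum _ _ _)).
apply: (@le_lt_trans _ _ (\sum_k `|L i k| * (e / (c + 1)))).
  apply: ler_sum => k _; rewrite -mulrBr normrM ler_wpM2l //.
  by have := uv k j; rewrite /ball /= => /ltW.
rewrite -mulr_suml.
apply: (@le_lt_trans _ _ (c * (e / (c + 1)))).
  by rewrite ler_wpM2r // divr_ge0 // ltW.
rewrite mulrA ltr_pdivrMr // [c * e]mulrC ltr_pM2l //.
by rewrite ltrDl ltr01.
Qed.
Lemma cont_pair (T U V : topologicalType) (f : T -> U) (g : T -> V) :
  continuous f -> continuous g -> continuous (fun x => (f x, g x)).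
Proof. move=> cf cg x; exact: (@cvg_pair _ _ _ (nbhs x) (nbhs (f x)) (nbhs (g x)) _ _ _ f g (cf x) (cg x)). Qed.

Lemma cont_lin2 (R : realType) n (L1 L2 : 'M[R]_n) :
  continuous (fun P : 'M[R]_n * 'M[R]_n => L1 *m P.1 + L2 *m P.2).
Proof.
move=> P; apply: (@continuousD _ _ _ (fun P : 'M[R]_n * 'M[R]_n => L1 *m P.1) (fun P : 'M[R]_n * 'M[R]_n => L2 *m P.2)).
  apply: continuous_comp; first exact: cvg_fst.
  exact: cont_mulmx.
apply: continuous_comp; first exact: cvg_snd.
exact: cont_mulmx.
Qed.

Lemma mulmx_mfun (R : realType) n (A : 'M[R[i]]_n) :
  measurable_fun (setT : set (cmx_borel R n))
    (fun C : cmx_borel R n => (A *m C : 'M[R[i]]_n) : cmx_borel R n).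
Proof.
apply: (@measurability _ _ _ _ setT _ (@cmx_open R n : set (set (cmx_borel R n)))) => //.
move=> _ [S [U oU <-] <-].
apply: sub_sigma_algebra.
pose phi := fun P : 'M[R]_n * 'M[R]_n =>
  ((reim A).1 *m P.1 + (- (reim A).2) *m P.2, (reim A).2 *m P.1 + (reim A).1 *m P.2).
exists (phi @^-1` U).
  apply: open_comp => // P _.
  exact: (@cont_pair _ _ _ _ _ (@cont_lin2 R n (reim A).1 (- (reim A).2)) (@cont_lin2 R n (reim A).2 (reim A).1) P).
have E : forall C, phi (reim C) = reim (A *m C) by move=> C; rewrite reim_mul /phi mulNmx.
apply/seteqP; split => C /=; rewrite E; tauto.
Qed.
Import HBNNSimple.
Section compnn.
Context d (T : measurableType d) (R : realType) (phi : T -> T)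
  (mphi : measurable_fun setT phi) (h : {nnsfun T >-> R}).
Definition hcomp := fun x => h (phi x).
Lemma hcomp_mf : measurable_fun setT hcomp.
Proof. exact: measurableT_comp. Qed.
HB.instance Definition _ := isMeasurableFun.Build _ _ T R hcomp hcomp_mf.
Lemma hcomp_fin : finite_set (range hcomp).
Proof.
apply: (sub_finite_set _ (fimfunP h)) => _ [x _ <-]; by exists (phi x).
Qed.
HB.instance Definition _ := FiniteImage.Build T R hcomp hcomp_fin.
HB.instance Definition _ := isNonNegFun.Build T R hcomp (fun x => fun_ge0 (phi x)).
Definition hcomp_nnsfun : {nnsfun T >-> R} := hcomp.
End compnn.
Section inv.
Local Open Scope ereal_scope.
Context d (T : measurableType d) (R : realType) (mu : {measure set T -> \bar R})
  (phi psi : T -> T) (phiK : cancel phi psi) (psiK : cancel psi phi)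
  (mphi : measurable_fun setT phi) (mpsi : measurable_fun setT psi)
  (pres : forall B, measurable B -> mu (phi @^-1` B) = mu B).

Lemma pres' B : measurable B -> mu (psi @^-1` B) = mu B.
Proof.
move=> mB; rewrite -pres; last first.
  by rewrite -(setTI (psi @^-1` B)); apply: mpsi.
congr (mu _); apply/seteqP; split => x /=; by rewrite phiK.
Qed.

Lemma sint_comp (f : T -> T) (h : {nnsfun T >-> R}) :
  (forall B, measurable B -> mu (f @^-1` B) = mu B) ->
  sintegral mu (fun x => h (f x)) = sintegral mu h.
Proof.
move=> pf; rewrite /sintegral; apply: eq_fsbigr => r _.
have mh : measurable (h @^-1` [set r]).
  by rewrite -(setTI (h @^-1` _)); apply: measurable_funPT.
by rewrite -(pf _ mh).
Qed.

Definition nnint (f : T -> \bar R) := ereal_sup [set sintegral mu h |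
  h in [set h : {nnsfun T >-> R} | forall x, (h x)%:E <= f x]].

Lemma nnint_comp f : nnint (fun x => f (phi x)) = nnint f.
Proof.
rewrite /nnint; congr ereal_sup; apply/seteqP; split => _ [h hf <-].
  exists (@hcomp_nnsfun _ _ _ psi mpsi h) => /=.
    by move=> x; have := hf (psi x); rewrite psiK.
  exact: (@sint_comp psi h pres').
exists (@hcomp_nnsfun _ _ _ phi mphi h) => //=.
  by move=> x; exact: hf.
exact: (@sint_comp phi h pres).
Qed.

Lemma integral_comp (D : set T) (f : T -> \bar R) :
  (forall x, D (phi x) <-> D x) ->
  \int[mu]_(x in D) f (phi x) = \int[mu]_(x in D) f x.
Proof.
move=> hD.
have E : (fun x => f (phi x)) \_ D = (fun x => (f \_ D) (phi x)).
  apply/funext => x; rewrite /patch.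
  have -> : (phi x \in D) = (x \in D).
    by apply/idP/idP; rewrite !in_setE => /hD.
  by [].
rewrite /integral /= E.
rewrite (_ : (fun x => (f \_ D) (phi x)) = (f \_ D) \o phi) // funepos_comp funeneg_comp.
by rewrite -!/(nnint _) !nnint_comp.
Qed.
End inv.

Lemma sqnormE (R : realType) n (v : 'cV[R[i]]_n) :
  sqnorm v = complex.Re (((map_mx conjc v)^T *m v) 0 0).
Proof.
rewrite /sqnorm mxE Re_sum; apply: eq_bigr => k _; rewrite !mxE.
by case: (v k 0) => a b /=; rewrite !expr2 mulNr opprK.
Qed.

Lemma sqnorm_unitary (R : realType) n (A : 'M[R[i]]_n) (v : 'cV[R[i]]_n) :
  unitary A -> sqnorm (A *m v) = sqnorm v.
Proof.
move=> uA; rewrite !sqnormE map_mxM trmx_mul -!mulmxA (mulmxA _ A).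
by move: uA; rewrite /unitary /adjmx => ->; rewrite mul1mx.
Qed.

Section Main.
Variables (R : realType) (n N : nat) (G : set 'M[R[i]]_n)
  (eta : probability (cmx_borel R n) R) (eps : R) (x : 'I_N -> 'cV[R[i]]_n).
Hypothesis HG : compact_unitary_group G.
Hypothesis Hh : haar_prob G eta.

Lemma G_unit A : G A -> A \in unitmx.
Proof.
case: HG => _ _ _ hu _ /hu; rewrite /unitary => /mulmx1_unit [_ ->] //.
Qed.

Lemma intG_comp A (GA : G A) (f : 'M[R[i]]_n -> R) :
  intG G eta (fun C => f (A *m C)) = intG G eta f.
Proof.
have uA := @G_unit A GA.
case: HG => _ hM hI _ _.
rewrite /intG /Rintegral; congr fine.
apply: (@integral_comp _ (cmx_borel R n) R eta (fun C => A *m C) (fun C => invmx A *m C)).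
- by move=> C; rewrite mulmxA mulVmx // mul1mx.
- by move=> C; rewrite mulmxA mulmxV // mul1mx.
- exact: mulmx_mfun.
- exact: mulmx_mfun.
- by move=> B mB; case: Hh => _ /(_ A GA B mB).
- move=> C; split; last exact: hM.
  by move=> /(hM _ _ (hI _ GA)); rewrite mulmxA mulVmx // mul1mx.
Qed.

Lemma G_unitary A : G A -> unitary A.
Proof. by case: HG => _ _ _ hu _ /hu. Qed.

Lemma SpowS t a b A B : Spow G eta eps x t.+2 a b A B =
  \sum_(k < N) intG G eta (fun C => Spow G eta eps x t.+1 a k A C * Sk G eta eps x k b C B).
Proof. by []. Qed.

Variables (i j : 'I_N) (Q : 'M[R[i]]_n).
Hypotheses (GQ : G Q) (xj : x j = Q *m x i).

Let Q' := invmx Q.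
Let GQ' : G Q'.
Proof. by case: HG => _ _ hI _ _; apply: hI. Qed.
Let uQ : unitary Q. Proof. exact: G_unitary. Qed.
Let uQ' : unitary Q'. Proof. exact: G_unitary. Qed.
Let QU : Q \in unitmx. Proof. exact: G_unit. Qed.

Lemma W_ji k C : Wk eps x j k 1%:M C = Wk eps x i k 1%:M (Q' *m C).
Proof.
rewrite /Wk !mul1mx xj.
have -> : sqnorm (Q *m x i - C *m x k) = sqnorm (x i - Q' *m C *m x k).
  rewrite -(@sqnorm_unitary _ _ Q (x i - Q' *m C *m x k) uQ).
  by rewrite mulmxBr !mulmxA mulmxV // mul1mx.
by [].
Qed.

Lemma D_ji : Dk G eta eps x j = Dk G eta eps x i.
Proof.
rewrite /Dk; apply: eq_bigr => k _.
transitivity (intG G eta (fun C => Wk eps x i k 1%:M (Q' *m C))).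
  by apply: (congr1 (intG G eta)); apply: funext => C; exact: W_ji.
exact: (@intG_comp Q' GQ' (fun C => Wk eps x i k 1%:M C)).
Qed.

Lemma Sk_inv k r C B :
  Sk G eta eps x k r C B = Sk G eta eps x k r (Q' *m C) (Q' *m B).
Proof.
rewrite /Sk /Wk.
have -> : sqnorm (C *m x k - B *m x r) = sqnorm (Q' *m C *m x k - Q' *m B *m x r).
  by rewrite -(@sqnorm_unitary _ _ Q' _ uQ') mulmxBr !mulmxA.
by [].
Qed.

Lemma S_ji k C : Sk G eta eps x j k 1%:M C = Sk G eta eps x i k 1%:M (Q' *m C).
Proof. by rewrite /Sk W_ji D_ji. Qed.

Lemma Spow_ji t k C :
  Spow G eta eps x t j k 1%:M C = Spow G eta eps x t i k 1%:M (Q' *m C).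
Proof.
elim: t k C => [|t IH] k C; first exact: S_ji.
case: t IH => [|t] IH; first exact: S_ji.
rewrite !SpowS; apply: eq_bigr => k' _.
transitivity (intG G eta (fun C' => Spow G eta eps x t.+1 i k' 1%:M (Q' *m C') *
   Sk G eta eps x k' k (Q' *m C') (Q' *m C))).
  by apply: (congr1 (intG G eta)); apply: funext => C'; rewrite IH -Sk_inv.
exact: (@intG_comp Q' GQ' (fun C' => Spow G eta eps x t.+1 i k' 1%:M C' *
   Sk G eta eps x k' k C' (Q' *m C))).
Qed.

Lemma main_eq t k r R0 :
  circconv G eta (fun k C => Spow G eta eps x t i k 1%:M C)
    (fun k C => Spow G eta eps x t i k 1%:M C) k r R0 =
  circconv G eta (fun k C => Spow G eta eps x t j k 1%:M C)
    (fun k C => Spow G eta eps x t j k 1%:M C) k r R0.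
Proof.
rewrite /circconv.
symmetry.
transitivity (intG G eta (fun C => Spow G eta eps x t i k 1%:M (Q' *m C) *
   Spow G eta eps x t i r 1%:M (Q' *m C *m R0))).
  by apply: (congr1 (intG G eta)); apply: funext => C; rewrite !Spow_ji mulmxA.
exact: (@intG_comp Q' GQ' (fun C => Spow G eta eps x t i k 1%:M C *
   Spow G eta eps x t i r 1%:M (C *m R0))).
Qed.
End Main.

Theorem proposition3 (R : realType) (n N : nat) (G : set 'M[R[i]]_n)
  (eta : probability (cmx_borel R n) R) (eps : R) (x : 'I_N -> 'cV[R[i]]_n)
  (t : nat) (i j : 'I_N) (Q : 'M[R[i]]_n) :
  compact_unitary_group G ->
  haar_prob G eta ->
  0 < eps ->
  (forall a b : 'I_N, a != b -> x a != x b) ->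
  (forall (a : 'I_N) (A : 'M[R[i]]_n), G A -> A != 1%:M -> A *m x a != x a) ->
  (0 < t)%N ->
  G Q -> x j = Q *m x i ->
  forall (k r : 'I_N) (R0 : 'M[R[i]]_n), G R0 ->
    let Si := fun (k : 'I_N) (C : 'M[R[i]]_n) => Spow G eta eps x t i k 1%:M C in
    let Sj := fun (k : 'I_N) (C : 'M[R[i]]_n) => Spow G eta eps x t j k 1%:M C in
    circconv G eta Si Si k r R0 = circconv G eta Sj Sj k r R0.
Proof.
move=> HG Hh _ _ _ _ GQ xj k r R0 _ Si Sj.
exact: (@main_eq R n N G eta eps x HG Hh i j Q GQ xj t k r R0).
Qed.
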